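(* Let $N=\{1,\ldots,n\}$ and $\mathcal{X}=\{-1,1\}^n$. A deterministic voting rule $\phi:\mathcal{X}\to\{-1,1\}$ is weakly robust and anonymous if and only if it is an anonymous simple majority rule, i.e. a rule satisfying $\phi(x)=1$ whenever $\sum_ix_i>0$ and $\phi(x)=-1$ whenever $\sum_ix_i<0$, whose values on ties $\sum_ix_i=0$ are such that $\phi$ is anonymous.
   Context: $\phi$ is anonymous if $\phi(x)=\phi((x_{\pi(i)})_{i\in N})$ for all $x$ and all permutations $\pi$ of $N$. Responsiveness: $r_i(\phi,p)=p(\{x:\phi(x)=x_i\})$ for $p\in\Delta(\mathcal{X})$ (probability distributions on $\mathcal{X}$). $\phi$ is weakly robust if for every $p\in\Delta(\mathcal{X})$ there is some $i\in N$ with $r_i(\phi,p)\geq1/2$. *)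

(* Defs.v *)
From HB Require Import structures.
From mathcomp Require Import all_boot all_order all_algebra all_fingroup.
From mathcomp Require Import reals.
Set Implicit Arguments. Unset Strict Implicit. Unset Printing Implicit Defensive.
Import Order.TTheory GRing.Theory Num.Theory.
Local Open Scope ring_scope.

(* N = {1,...,n} is represented by 'I_n; a vote in {-1,1} by a bool,
   with true = 1 and false = -1. *)
Definition profile (n : nat) := {ffun 'I_n -> bool}.

Definition vote_val (b : bool) : int := if b then 1 else -1.

Definition rule (n : nat) := profile n -> bool.

Definition anonymous (n : nat) (phi : rule n) : Prop :=
  forall (x : profile n) (pi : 'S_n), phi x = phi [ffun i => x (pi i)].

Definition is_distribution (R : realType) (n : nat) (p : profile n -> R) : Prop :=
  (forall x, 0 <= p x) /\ \sum_(x : profile n) p x = 1.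

Definition responsiveness (R : realType) (n : nat) (phi : rule n) (p : profile n -> R)
  (i : 'I_n) : R :=
  \sum_(x : profile n | phi x == x i) p x.

Definition weakly_robust (R : realType) (n : nat) (phi : rule n) : Prop :=
  forall p : profile n -> R, is_distribution p ->
    exists i : 'I_n, 1 / 2 <= responsiveness phi p i.

Definition simple_majority (n : nat) (phi : rule n) : Prop :=
  forall x : profile n,
    (0 < \sum_(i < n) vote_val (x i) -> phi x = true) /\
    (\sum_(i < n) vote_val (x i) < 0 -> phi x = false).

Definition anonymous_simple_majority (n : nat) (phi : rule n) : Prop :=
  simple_majority phi /\ anonymous phi.

(* Main.v *)
Require Import Defs.
From HB Require Import structures.
From mathcomp Require Import all_boot all_order all_algebra all_fingroup.
From mathcomp Require Import reals.
From mathcomp Require Import zify lra.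
Set Implicit Arguments. Unset Strict Implicit. Unset Printing Implicit Defensive.
Import Order.TTheory GRing.Theory Num.Theory.
Local Open Scope ring_scope.

Definition cnt n (x : profile n) (b : bool) : nat := (\sum_(i < n) (x i == b))%N.

Lemma cnt_tot n (x : profile n) : (cnt x true + cnt x false)%N = n.
Proof.
rewrite /cnt -big_split /=.
rewrite -[n in RHS]card_ord -sum1_card.
by apply: eq_bigr => i _; case: (x i).
Qed.

Lemma vsum n (x : profile n) :
  \sum_(i < n) vote_val (x i) = (cnt x true)%:Z - (cnt x false)%:Z.
Proof.
rewrite /cnt -!natz !natr_sum -sumrB.
by apply: eq_bigr => i _; case: (x i).
Qed.

Lemma maj_cnt n (phi : rule n) : simple_majority phi ->
  forall x, (n <= 2 * cnt x (phi x))%N.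
Proof.
move=> hm x; have [h1 h2] := hm x; move: h1 h2; rewrite vsum.
have := cnt_tot x.
case: (phi x) => ht h1 h2.
  have h : ~~ ((cnt x true)%:Z - (cnt x false)%:Z < 0).
    by apply/negP => /h2.
  rewrite -leNgt in h; lia.
have h : ~~ (0 < (cnt x true)%:Z - (cnt x false)%:Z).
  by apply/negP => /h1.
rewrite -leNgt in h; lia.
Qed.

Lemma robust_of_maj (R : realType) n (hn : (0 < n)%N) (phi : rule n) :
  simple_majority phi -> weakly_robust R phi.
Proof.
move=> hm p [p0 p1].
case: (boolP [exists i, 1/2 <= responsiveness phi p i]) => [/existsP//|/existsPn H].
exfalso.
have hlt : \sum_(i < n) responsiveness phi p i < \sum_(i < n) (1/2 : R).
  apply: ltr_sum; first by apply/hasP; exists (Ordinal hn); rewrite ?mem_index_enum.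
  by move=> i _; rewrite ltNge; apply: H.
have heq : \sum_(i < n) responsiveness phi p i
    = \sum_(x : profile n) (cnt x (phi x))%:R * p x.
  rewrite /responsiveness.
  under eq_bigr do rewrite big_mkcond.
  rewrite exchange_big /=; apply: eq_bigr => x _.
  rewrite /cnt natr_sum mulr_suml; apply: eq_bigr => i _.
  by rewrite eq_sym; case: (_ == _); rewrite ?mul1r ?mul0r.
have hge : \sum_(x : profile n) (n%:R / 2) * p x <= \sum_(x : profile n) (cnt x (phi x))%:R * p x.
  apply: ler_sum => x _; apply: ler_wpM2r => //.
  rewrite ler_pdivrMr // -natrM ler_nat mulnC; exact: maj_cnt.
move: hge; rewrite -heq -mulr_sumr p1 mulr1 => hge.
move: hlt; rewrite sumr_const card_ord.
have e : ((1/2:R) *+ n) = n%:R / 2.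
  rewrite -[(1/2:R) *+ n]mulr_natr; lra.
rewrite e => hlt.
move: (lt_le_trans hlt hge); by rewrite ltxx.
Qed.

Lemma sum_delta (R : realType) (T : finType) (P : pred T) (z : T) (c : R) :
  \sum_(y | P y) (z == y)%:R * c = if P z then c else 0.
Proof.
rewrite big_mkcond (bigD1 z) //= eqxx mul1r big1 ?addr0 //.
move=> y hy; rewrite eq_sym (negbTE hy) mul0r; by case: (P y).
Qed.

Lemma sum_ifb n (x : profile n) (b : bool) (R : realType) (c : R) :
  \sum_(j < n) (if b == x j then c else 0) = (cnt x b)%:R * c.
Proof.
rewrite /cnt natr_sum mulr_suml; apply: eq_bigr => j _.
by rewrite eq_sym; case: (_ == _); rewrite ?mul1r ?mul0r.
Qed.

Lemma maj_of_robust (R : realType) n (phi : rule n) :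
  weakly_robust R phi -> anonymous phi ->
  forall x b, (2 * cnt x b < n)%N -> phi x != b.
Proof.
move=> hr ha x b hc; apply/negP => /eqP hb.
pose K := #|{perm 'I_n}|.
have Kpos : (0 : R) < K%:R by rewrite ltr0n /K card_Sn fact_gt0.
pose xp (pi : {perm 'I_n}) : profile n := [ffun i => x (pi i)].
pose p (y : profile n) : R := \sum_(pi : {perm 'I_n}) (xp pi == y)%:R * K%:R^-1.
have hd : is_distribution p.
  split.
    move=> y; apply: sumr_ge0 => pi _; apply: mulr_ge0 => //.
    by rewrite invr_ge0 ltW.
  rewrite /p exchange_big /=.
  under eq_bigr do rewrite -(big_mkcond (fun _ => true)) sum_delta /=.
  rewrite sumr_const -[_ *+ _]mulr_natl; rewrite (_ : #|_| = K) //; by rewrite mulfV // gt_eqF.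
pose g (i : 'I_n) : R := \sum_(pi : {perm 'I_n}) (if b == x (pi i) then K%:R^-1 else 0).
have hrg : forall i, responsiveness phi p i = g i.
  move=> i; rewrite /responsiveness /p exchange_big /=.
  apply: eq_bigr => pi _; rewrite sum_delta /xp ffunE -ha hb.
  by [].
have hgg : forall i j, g i = g j.
  move=> i j; rewrite /g (reindex_inj (mulgI (tperm i j))) /=.
  by apply: eq_bigr => pi _; rewrite permM tpermL.
have hn : forall i, n%:R * g i = (cnt x b)%:R.
  move=> i.
  have -> : n%:R * g i = \sum_(j < n) g j.
    by rewrite (eq_bigr (fun _ => g i)) ?sumr_const ?card_ord ?mulr_natl // => j _; rewrite (hgg j i).
  rewrite /g exchange_big /=.
  rewrite (eq_bigr (fun _ => (cnt x b)%:R * K%:R^-1)); last first.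
    move=> pi _.
    rewrite (reindex_inj (@perm_inj _ pi^-1)) /=.
    under eq_bigr do rewrite permKV.
    by rewrite sum_ifb.
  rewrite sumr_const -[_ *+ _]mulr_natl (_ : #|_| = K) //; by rewrite mulrCA mulfV ?mulr1 // gt_eqF.
have [i hi] := hr p hd.
rewrite hrg in hi.
have h1 : n%:R * (1/2) <= n%:R * g i :> R.
  by apply: ler_wpM2l.
rewrite hn in h1.
have h2 : ((2 * cnt x b)%:R < n%:R :> R) by rewrite ltr_nat.
rewrite natrM in h2.
lra.
Qed.

Theorem corollary3 (R : realType) (n : nat) (hn : (0 < n)%N) (phi : rule n) :
  (weakly_robust R phi /\ anonymous phi) <-> anonymous_simple_majority phi.
Proof.
split.
  move=> [hr ha]; split => // x; rewrite vsum; have := cnt_tot x.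
  have h := @maj_of_robust R n phi hr ha x.
  split=> hs.
    have : phi x != false by apply: h; lia.
    by case: (phi x).
  have : phi x != true by apply: h; lia.
  by case: (phi x).
move=> [hm ha]; split => //; exact: robust_of_maj.
Qed.
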